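(* Let $\mathfrak h\subseteq\Phi^+$ be a Hessenberg set and let $H_T^*(\mathfrak h)$ be its GKM ring. Then $H_T^*(\mathfrak h)$ is stable under the action of $W$ on $\mathrm{Maps}(W,\mathbb R[\Delta])$ given by $(w\cdot\mathcal P)(u)=w\,\mathcal P(w^{-1}u)$ for $w,u\in W$, where on the right $w$ acts on the polynomial $\mathcal P(w^{-1}u)\in\mathbb R[\Delta]$. That is, if $\mathcal P\in H_T^*(\mathfrak h)$ and $w\in W$ then $w\cdot\mathcal P\in H_T^*(\mathfrak h)$.
   Context: Let $V$ be a finite-dimensional real vector space with a symmetric positive definite bilinear form $(\,,)$; for nonzero $\alpha\in V$ let $s_\alpha(v)=v-\frac{2(\alpha,v)}{(\alpha,\alpha)}\alpha$. Let $\Phi\subset V$ be a (crystallographic) root system with base $\Delta=\{\alpha_1,\dots,\alpha_k\}$, positive roots $\Phi^+$ and negative roots $\Phi^-=-\Phi^+$. Write $\alpha\prec\beta$ if $\beta-\alpha$ is a sum of positive roots. A Hessenberg set is a subset $\mathfrak h\subseteq\Phi^+$ whose complement $\Phi^+\setminus\mathfrak h$ is upward closed in $\Phi^+$ (if $\beta\in\Phi^+\setminus\mathfrak h$, $\alpha\in\Phi^+$ and $\beta\prec\alpha$, then $\alpha\in\Phi^+\setminus\mathfrak h$). $W$ is the Weyl group generated by the reflections $s_{\alpha_i}$; it acts linearly on $V$ and hence on the polynomial ring $\mathbb R[\Delta]=\mathbb R[\alpha_1,\dots,\alpha_k]$. The Hessenberg graph $\Gamma_{\mathfrak h}$ has vertex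 set $W$ and a directed edge $u\to w$ whenever $w=s_\alpha u$ with $\alpha\in\Phi^+$ and $w^{-1}\alpha\in-\mathfrak h$. The GKM ring is $H_T^*(\mathfrak h)=\{\mathcal P:W\to\mathbb R[\Delta] : \mathcal P(w)-\mathcal P(s_\alpha w)\in\langle\alpha\rangle \text{ for every edge } w\to s_\alpha w \text{ or } s_\alpha w\to w \text{ of }\Gamma_{\mathfrak h}\}$, where $\langle\alpha\rangle$ is the principal ideal generated by $\alpha$. *)

(* Defs.v *)
From HB Require Import structures.
From mathcomp Require Import all_boot all_order all_algebra.
From mathcomp Require Import mpoly.
Set Implicit Arguments. Unset Strict Implicit. Unset Printing Implicit Defensive.
Import Order.TTheory GRing.Theory Num.Theory.
Local Open Scope ring_scope.

(* Linear maps of V are matrices M acting on the right: v |-> v *m M.    *)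

Section Hess.
Variables (R : realFieldType) (n k : nat).
Variable B : 'M[R]_n.

Definition form (u v : 'rV[R]_n) : R := (u *m B *m v^T) 0 0.

Definition symmetric_posdef : Prop :=
  B^T = B /\ forall v : 'rV[R]_n, v != 0 -> 0 < form v v.

Definition sref (a v : 'rV[R]_n) : 'rV[R]_n :=
  v - (2 * form a v / form a a) *: a.

Definition reflmx (a : 'rV[R]_n) : 'M[R]_n := lin1_mx (sref a).

Definition app (w : 'M[R]_n) (v : 'rV[R]_n) : 'rV[R]_n := v *m w.
(* compose w1 w2 = w1 o w2 *)
Definition compose (w1 w2 : 'M[R]_n) : 'M[R]_n := w2 *m w1.

(* (crystallographic, reduced) root system, Humphreys' axioms *)
Definition is_root_system (Phi : seq 'rV[R]_n) : Prop :=
  [/\ (0 : 'rV[R]_n) \notin Phi,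
      (forall v : 'rV[R]_n, exists c : 'I_(size Phi) -> R,
          v = \sum_(i < size Phi) c i *: Phi`_i),
      (forall a, a \in Phi -> forall c : R, c *: a \in Phi -> c = 1 \/ c = -1),
      (forall a b, a \in Phi -> b \in Phi -> sref a b \in Phi) &
      (forall a b, a \in Phi -> b \in Phi ->
          exists z : int, 2 * form a b / form a a = z%:~R)].

Definition is_base (Phi : seq 'rV[R]_n) (alpha : 'I_k -> 'rV[R]_n) : Prop :=
  [/\ (forall i, alpha i \in Phi),
      (forall c : 'I_k -> R, \sum_i c i *: alpha i = 0 -> forall i, c i = 0) &
      (forall b, b \in Phi -> exists c : 'I_k -> int,
          b = \sum_i (c i)%:~R *: alpha i /\
          ((forall i, 0 <= c i) \/ (forall i, c i <= 0)))].

Variables (Phi : seq 'rV[R]_n) (alpha : 'I_k -> 'rV[R]_n).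

Definition pos_root (b : 'rV[R]_n) : Prop :=
  b \in Phi /\ exists c : 'I_k -> R,
    b = \sum_i c i *: alpha i /\ forall i, 0 <= c i.

Definition prec (a b : 'rV[R]_n) : Prop :=
  exists s : seq 'rV[R]_n, (forall x, x \in s -> pos_root x) /\
    b - a = \sum_(x <- s) x.

Definition hessenberg (h : 'rV[R]_n -> Prop) : Prop :=
  (forall b, h b -> pos_root b) /\
  (forall b a, pos_root b -> ~ h b -> pos_root a -> prec b a -> ~ h a).

(* Weyl group: the group generated by the simple reflections; a word is a *)
(* list of (generator, inverted?) pairs *)
Definition word_mx (s : seq ('I_k * bool)) : 'M[R]_n :=
  foldr (fun ib m => compose (if ib.2 then invmx (reflmx (alpha ib.1))
                                     else reflmx (alpha ib.1)) m) 1%:M s.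

Definition inW (w : 'M[R]_n) : Prop := exists s, w = word_mx s.

(* R[Delta] = R[alpha_1, ..., alpha_k] = {mpoly R[k]}, 'X_i <-> alpha_i *)
Definition basemx : 'M[R]_(k, n) := \matrix_(i < k) alpha i.
(* coordinates of v in the basis Delta (for v in the span of Delta) *)
Definition coord (v : 'rV[R]_n) : 'rV[R]_k := v *m pinvmx basemx.
Definition lin (v : 'rV[R]_n) : {mpoly R[k]} :=
  \sum_(i < k) (coord v) 0 i *: 'X_i.

Definition polyact (w : 'M[R]_n) (P : {mpoly R[k]}) : {mpoly R[k]} :=
  comp_mpoly [tuple lin (app w (alpha i)) | i < k] P.

Definition in_ideal (P : {mpoly R[k]}) (a : 'rV[R]_n) : Prop :=
  exists q : {mpoly R[k]}, P = q * lin a.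

Variable h : 'rV[R]_n -> Prop.

Definition edge (u w : 'M[R]_n) (a : 'rV[R]_n) : Prop :=
  [/\ inW u, inW w, pos_root a, w = compose (reflmx a) u &
      h (- app (invmx w) a)].

(* GKM ring: maps W -> R[Delta] (values outside W are irrelevant) *)
Definition GKM (P : 'M[R]_n -> {mpoly R[k]}) : Prop :=
  forall u w a, edge u w a -> in_ideal (P u - P w) a.

Definition Wact (w : 'M[R]_n) (P : 'M[R]_n -> {mpoly R[k]}) :
  'M[R]_n -> {mpoly R[k]} :=
  fun u => polyact w (P (compose (invmx w) u)).

End Hess.

(* Main.v *)
Require Import Defs.
From HB Require Import structures.
From mathcomp Require Import all_boot all_order all_algebra.
From mathcomp Require Import mpoly.
From mathcomp Require Import ring.
Set Implicit Arguments. Unset Strict Implicit. Unset Printing Implicit Defensive.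
Import Order.TTheory GRing.Theory Num.Theory.
Local Open Scope ring_scope.

Section Aux.
Variables (R : realFieldType) (n : nat) (B : 'M[R]_n).

Lemma formDl u u' v : Defs.form B (u + u') v = Defs.form B u v + Defs.form B u' v.
Proof. by rewrite /Defs.form !mulmxDl mxE. Qed.
Lemma formZl c u v : Defs.form B (c *: u) v = c * Defs.form B u v.
Proof. by rewrite /Defs.form -!scalemxAl mxE. Qed.
Lemma formDr u v v' : Defs.form B u (v + v') = Defs.form B u v + Defs.form B u v'.
Proof. by rewrite /Defs.form linearD /= mulmxDr mxE. Qed.
Lemma formZr c u v : Defs.form B u (c *: v) = c * Defs.form B u v.
Proof. by rewrite /Defs.form linearZ /= -scalemxAr mxE. Qed.
Lemma formNl u v : Defs.form B (- u) v = - Defs.form B u v.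
Proof. by rewrite -scaleN1r formZl mulN1r. Qed.
Lemma formNr u v : Defs.form B u (- v) = - Defs.form B u v.
Proof. by rewrite -scaleN1r formZr mulN1r. Qed.
Lemma formBl u u' v : Defs.form B (u - u') v = Defs.form B u v - Defs.form B u' v.
Proof. by rewrite formDl formNl. Qed.
Lemma formBr u v v' : Defs.form B u (v - v') = Defs.form B u v - Defs.form B u v'.
Proof. by rewrite formDr formNr. Qed.

Lemma formC (HB : symmetric_posdef B) u v : Defs.form B u v = Defs.form B v u.
Proof.
case: HB => HBt _; rewrite /Defs.form.
have E (M : 'M[R]_1) : M 0 0 = M^T 0 0 by rewrite mxE.
rewrite E.
by rewrite !trmx_mul trmxK HBt mulmxA.
Qed.
Local Notation fm := (Defs.form B).

Lemma sref_lin a : linear_for *:%R (sref B a).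
Proof.
move=> c u v; rewrite /sref formDr formZr.
have -> : 2 * (c * fm a u + fm a v) / fm a a = c * (2 * fm a u / fm a a) + 2 * fm a v / fm a a.
  by rewrite !mulrA mulrDr mulrDl mulrCA !mulrA.
rewrite scalerDl scalerBr -scalerA.
rewrite !opprD !addrA; congr (_ + _).
by rewrite addrAC.
Qed.

HB.instance Definition _ a := GRing.isLinear.Build R 'rV[R]_n 'rV[R]_n *:%R (sref B a) (sref_lin a).

Lemma app_refl a v : v *m reflmx B a = sref B a v.
Proof. by rewrite /reflmx mul_rV_lin1. Qed.

Lemma sref_invol a v : fm a a != 0 -> sref B a (sref B a v) = v.
Proof.
move=> ha; rewrite /sref formBr formZr.
set t := fm a a; set x := fm a v.
have -> : 2 * (x - 2 * x / t * t) / t = - (2 * x / t).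
  by field.
by rewrite scaleNr opprK subrK.
Qed.

Lemma matP (M N : 'M[R]_n) : (forall v : 'rV[R]_n, v *m M = v *m N) -> M = N.
Proof. by move=> H; apply/row_matrixP => i; rewrite !rowE H. Qed.

Lemma refl_sq a : fm a a != 0 -> reflmx B a *m reflmx B a = 1%:M.
Proof.
by move=> ha; apply: matP => v; rewrite mulmxA !app_refl sref_invol // mulmx1.
Qed.

Lemma refl_unit a : fm a a != 0 -> reflmx B a \in unitmx.
Proof.
move=> ha; have := refl_sq ha => /(congr1 (fun M => \det M)).
rewrite det_mulmx det1 => H; rewrite unitmxE unitfE; apply/eqP => H0.
by move: H; rewrite H0 mul0r => /eqP; rewrite eq_sym oner_eq0.
Qed.

Lemma refl_inv a : fm a a != 0 -> invmx (reflmx B a) = reflmx B a.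
Proof.
move=> ha; rewrite -[RHS]mul1mx -(mulVmx (refl_unit ha)) -mulmxA refl_sq //.
by rewrite mulmx1.
Qed.

Lemma sref_form (HB : symmetric_posdef B) a u v : fm a a != 0 ->
  fm (sref B a u) (sref B a v) = fm u v.
Proof.
move=> ha; rewrite /sref !(formBl, formBr, formZl, formZr).
rewrite (formC HB u a).
set t := fm a a; set x := fm a u; set y := fm a v.
by field.
Qed.
End Aux.

Section Main.
Variables (R : realFieldType) (n k : nat) (B : 'M[R]_n).
Variables (Phi : seq 'rV[R]_n) (alpha : 'I_k -> 'rV[R]_n).
Hypothesis HB : symmetric_posdef B.
Hypothesis HPhi : is_root_system B Phi.
Hypothesis Hbase : is_base Phi alpha.
Local Notation fm := (Defs.form B).
Local Notation r := (reflmx B).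

Lemma fm_Phi a : a \in Phi -> fm a a != 0.
Proof.
case: HPhi => H0 _ _ _ _; case: HB => _ Hp aP.
have : a != 0 by apply/eqP => E; move: H0; rewrite -E aP.
by move/Hp; rewrite lt0r => /andP [].
Qed.

Lemma alphaP i : alpha i \in Phi.
Proof. by case: Hbase. Qed.

Lemma invmxM' (A C : 'M[R]_n) : A \in unitmx -> C \in unitmx ->
  invmx (A *m C) = invmx C *m invmx A.
Proof.
move=> hA hC.
have hAC : A *m C \in unitmx by rewrite unitmx_mul hA hC.
have E : A *m C *m (invmx C *m invmx A) = 1%:M.
  by rewrite mulmxA -(mulmxA A) mulmxV // mulmx1 mulmxV.
by rewrite -[RHS]mul1mx -(mulVmx hAC) -mulmxA E mulmx1.
Qed.

Definition wm (l : seq 'I_k) : 'M[R]_n :=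
  foldr (fun i m => m *m r (alpha i)) 1%:M l.

Lemma word_wm s : word_mx B alpha s = wm (map fst s).
Proof.
elim: s => [|[i b] s IH] //=; rewrite /compose IH; case: b => //=.
by rewrite refl_inv // fm_Phi // alphaP.
Qed.

Lemma inW_wm l : inW B alpha (wm l).
Proof.
exists [seq (i, false) | i <- l]; rewrite word_wm -map_comp.
by rewrite (@eq_map _ _ _ id) ?map_id.
Qed.

Lemma inW_ex w : inW B alpha w -> exists l, w = wm l.
Proof. by case=> s ->; exists (map fst s); rewrite word_wm. Qed.

Lemma wm_cat l1 l2 : wm (l1 ++ l2) = wm l2 *m wm l1.
Proof. by elim: l1 => [|i l1 IH] /=; rewrite ?mulmx1 // IH mulmxA. Qed.

Lemma wm_unit l : wm l \in unitmx.
Proof.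
elim: l => [|i l IH] /=; first exact: unitmx1.
by rewrite unitmx_mul IH refl_unit // fm_Phi // alphaP.
Qed.

Lemma wm_inv l : invmx (wm l) = wm (rev l).
Proof.
elim: l => [|i l IH] /=; first by rewrite invmx1.
rewrite invmxM' ?wm_unit ?refl_unit ?fm_Phi ?alphaP // IH refl_inv ?fm_Phi ?alphaP //.
by rewrite rev_cons -cats1 wm_cat /= mul1mx.
Qed.

Lemma wm_form l u v : fm (u *m wm l) (v *m wm l) = fm u v.
Proof.
elim: l u v => [|i l IH] u v /=; first by rewrite !mulmx1.
by rewrite !mulmxA !app_refl sref_form ?IH ?fm_Phi ?alphaP.
Qed.

Lemma wm_Phi l x : x \in Phi -> x *m wm l \in Phi.
Proof.
case: HPhi => _ _ _ Hs _.
elim: l x => [|i l IH] x xP /=; first by rewrite mulmx1.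
by rewrite mulmxA app_refl Hs // ?alphaP // IH.
Qed.

Lemma refl_conj l a : fm a a != 0 ->
  r (a *m wm l) = invmx (wm l) *m r a *m wm l.
Proof.
move=> ha; apply: matP => v.
rewrite !mulmxA !app_refl /sref mulmxBl -scalemxAl mulmxKV ?wm_unit //.
rewrite wm_form; congr (_ - (_ / _) *: _).
by rewrite -{1}(mulmxKV (wm_unit l) v) wm_form.
Qed.

Lemma lin_lin : linear_for *:%R (lin alpha).
Proof.
move=> c u v; rewrite /Defs.lin /Defs.coord mulmxDl -scalemxAl scaler_sumr -big_split /=.
by apply: eq_bigr => i _; rewrite !mxE scalerDl scalerA.
Qed.

HB.instance Definition _ := GRing.isLinear.Build R 'rV[R]_n {mpoly R[k]} *:%R (lin alpha) lin_lin.

Lemma polyact_lin w b : (exists c : 'I_k -> R, b = \sum_i c i *: alpha i) ->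
  polyact alpha w (lin alpha b) = lin alpha (b *m w).
Proof.
move=> [c Hc].
have Hsub : (b <= basemx alpha)%MS.
  have -> : b = (\row_i c i) *m basemx alpha.
    by rewrite mulmx_sum_row Hc; apply: eq_bigr => i _; rewrite rowK mxE.
  exact: submxMl.
rewrite /polyact {2}/lin raddf_sum /=.
rewrite -[b in RHS](mulmxKpV Hsub) -/(Defs.coord alpha b) (mulmx_sum_row (Defs.coord alpha b) (basemx alpha)) mulmx_suml linear_sum /=.
apply: eq_bigr => i _; rewrite comp_mpolyZ comp_mpolyXU -tnth_nth tnth_mktuple.
by rewrite rowK -scalemxAl linearZ.
Qed.

Lemma sref_self b : fm b b != 0 -> sref B b b = - b.
Proof.
move=> hb; rewrite /sref -mulrA divff // mulr1 scaler_nat mulr2n opprD addrA.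
by rewrite subrr add0r.
Qed.

Lemma refl_opp b : r (- b) = r b.
Proof.
apply: matP => v; rewrite !app_refl /sref formNl formNr !formNl opprK.
by rewrite scalerN mulrN mulNr scaleNr opprK.
Qed.

Lemma solve_inv (N : 'M[R]_n) (x y : 'rV[R]_n) : N \in unitmx -> y *m N = x -> x *m invmx N = y.
Proof. by move=> hN <-; rewrite mulmxK. Qed.

Lemma main_sec (h : 'rV[R]_n -> Prop) (P : 'M[R]_n -> {mpoly R[k]})
  (HP : GKM B Phi alpha h P) (w : 'M[R]_n) (Hw : inW B alpha w) :
  GKM B Phi alpha h (Wact alpha w P).
Proof.
move=> u' w' a [Hu' Hw' Ha Ew Hh'].
case: (inW_ex Hw) => lw Ew0; case: (inW_ex Hu') => l1 E1; case: (inW_ex Hw') => l2 E2.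
have wU : w \in unitmx by rewrite Ew0 wm_unit.
have MW : invmx w = wm (rev lw) by rewrite Ew0 wm_inv.
have MU : invmx w \in unitmx by rewrite MW wm_unit.
have aPhi : a \in Phi by case: Ha.
have haa := fm_Phi aPhi.
set b := a *m invmx w.
have bPhi : b \in Phi by rewrite /b MW wm_Phi.
have hbb := fm_Phi bPhi.
have Hu : inW B alpha (compose (invmx w) u').
  by rewrite /compose MW E1 -wm_cat; apply: inW_wm.
have Hv : inW B alpha (compose (invmx w) w').
  by rewrite /compose MW E2 -wm_cat; apply: inW_wm.
have u'U : u' \in unitmx by rewrite E1 wm_unit.
have w'U : w' \in unitmx by rewrite E2 wm_unit.
have Erb : r b = w *m r a *m invmx w.
  by rewrite /b MW refl_conj // -MW invmxK.
have Evu : compose (invmx w) w' = compose (r b) (compose (invmx w) u').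
  by rewrite /compose Erb Ew /compose !mulmxA mulmxKV.
have Eu'w : u' = w' *m r a.
  by rewrite Ew /compose -mulmxA refl_sq // mulmx1.
have Elin : polyact alpha w (lin alpha b) = lin alpha a.
  rewrite polyact_lin; first by rewrite /b mulmxKV.
  case: Hbase => _ _ Hdec; case: (Hdec b bPhi) => c [Ebc _].
  by exists (fun i => (c i)%:~R).
case: Hbase => _ _ Hdec; case: (Hdec b bPhi) => c [Ebc [Hpos|Hneg]].
- have Hb : pos_root Phi alpha b.
    split => //; exists (fun i => (c i)%:~R); split => // i; by rewrite ler0z.
  have Hedge : edge B Phi alpha h (compose (invmx w) u') (compose (invmx w) w') b.
    split => //; rewrite /app (@solve_inv _ _ (a *m invmx w')) //.
      by rewrite /compose unitmx_mul w'U.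
    by rewrite /compose mulmxA mulmxKV.
  case: (HP _ _ _ Hedge) => q Hq.
  exists (polyact alpha w q); rewrite /Wact -Elin /polyact -comp_mpolyB Hq.
  by rewrite rmorphM.
- have Hb : pos_root Phi alpha (- b).
    split.
      by rewrite -sref_self //; case: HPhi => _ _ _ Hs _; apply: Hs.
    exists (fun i => - (c i)%:~R); split.
      by rewrite Ebc -sumrN; apply: eq_bigr => i _; rewrite scaleNr.
    by move=> i; rewrite oppr_ge0 lerz0.
  have Hedge : edge B Phi alpha h (compose (invmx w) w') (compose (invmx w) u') (- b).
    split => //.
      by rewrite Evu refl_opp /compose -mulmxA refl_sq // mulmx1.
    rewrite /app (@solve_inv _ _ (a *m invmx w')) //.
      by rewrite /compose unitmx_mul u'U.
    rewrite /compose Eu'w !mulmxA mulmxKV // app_refl sref_self //.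
    by rewrite mulNmx.
  case: (HP _ _ _ Hedge) => q Hq.
  exists (polyact alpha w q); rewrite /Wact.
  have E3 : polyact alpha w (lin alpha (- b)) = - lin alpha a.
    rewrite -Elin /polyact -comp_mpolyN; congr comp_mpoly.
    exact: (linearN (lin alpha)).
  apply: oppr_inj; rewrite opprB /polyact -comp_mpolyB Hq rmorphM.
  by rewrite /polyact in E3; rewrite /= E3 mulrN.

Qed.
End Main.

Theorem proposition2p3 (R : realFieldType) (n k : nat) (B : 'M[R]_n)
  (Phi : seq 'rV[R]_n) (alpha : 'I_k -> 'rV[R]_n) (h : 'rV[R]_n -> Prop)
  (HB : symmetric_posdef B)
  (HPhi : is_root_system B Phi)
  (Hbase : is_base Phi alpha)
  (Hh : hessenberg Phi alpha h)
  (P : 'M[R]_n -> {mpoly R[k]}) (HP : GKM B Phi alpha h P)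
  (w : 'M[R]_n) (Hw : inW B alpha w) :
  GKM B Phi alpha h (Wact alpha w P).
Proof. exact: (main_sec HB HPhi Hbase HP Hw). Qed.
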